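(* Let $G\rightrightarrows X$ be a topological groupoid which is proper and source-locally trivial. Then every fixed point $x\in X$ of $G$ is stable, i.e. every neighborhood of $x$ in $X$ contains a $G$-invariant neighborhood of $x$.
   Context: All spaces are Hausdorff and neighborhoods are open. $\alpha,\beta$ denote the target and source maps of $G$. $G$ is proper if the map $(\alpha,\beta):G\to X\times X$ is proper (preimages of compact sets are compact). $G$ is source-locally trivial if the source map $\beta:G\to X$ is a locally trivial fibration. A point $x\in X$ is a fixed point if its orbit $\{\alpha(g): \beta(g)=x\}$ is $\{x\}$. A subset $A\subseteq X$ is $G$-invariant if $\alpha(g)\in A$ whenever $\beta(g)\in A$. *)

(* Defs.v *)
From HB Require Import structures.
From mathcomp Require Import all_boot all_order all_algebra.
From mathcomp Require Import all_classical all_reals all_analysis.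
Set Implicit Arguments. Unset Strict Implicit. Unset Printing Implicit Defensive.
Import numFieldNormedType.Exports.
Local Open Scope classical_set_scope.

(* A topological groupoid G ==> X with target alpha, source beta, unit u,
   inverse inv and multiplication mul; g * h (= mul g h) is defined when
   beta g = alpha h (so g : beta g -> alpha g).  mul is a total function on
   G * G but its values are only constrained on composable pairs. *)
Record is_top_groupoid (G X : topologicalType) (alpha beta : G -> X)
    (u : X -> G) (inv : G -> G) (mul : G -> G -> G) : Prop := {
  tg_alpha_u : forall x, alpha (u x) = x;
  tg_beta_u : forall x, beta (u x) = x;
  tg_alpha_mul : forall g h, beta g = alpha h -> alpha (mul g h) = alpha g;
  tg_beta_mul : forall g h, beta g = alpha h -> beta (mul g h) = beta h;
  tg_assoc : forall g h k, beta g = alpha h -> beta h = alpha k ->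
     mul (mul g h) k = mul g (mul h k);
  tg_unit_l : forall g, mul (u (alpha g)) g = g;
  tg_unit_r : forall g, mul g (u (beta g)) = g;
  tg_alpha_inv : forall g, alpha (inv g) = beta g;
  tg_beta_inv : forall g, beta (inv g) = alpha g;
  tg_inv_r : forall g, mul g (inv g) = u (alpha g);
  tg_inv_l : forall g, mul (inv g) g = u (beta g);
  tg_cont_alpha : continuous alpha;
  tg_cont_beta : continuous beta;
  tg_cont_u : continuous u;
  tg_cont_inv : continuous inv;
  tg_cont_mul : {within [set p : G * G | beta p.1 = alpha p.2],
                   continuous (fun p : G * G => mul p.1 p.2)}
}.

Definition groupoid_proper (G X : topologicalType) (alpha beta : G -> X) : Prop :=
  forall K : set (X * X), compact K ->
    compact ((fun g => (alpha g, beta g)) @^-1` K).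

Definition locally_trivial_fibration (G X : topologicalType) (p : G -> X) : Prop :=
  forall x : X, exists U : set X, open U /\ U x /\
    exists (F : topologicalType) (phi : G -> X * F) (psi : X * F -> G),
      [/\ (forall g, U (p g) -> U (phi g).1 /\ (phi g).1 = p g /\ psi (phi g) = g),
          (forall q : X * F, U q.1 -> U (p (psi q)) /\ phi (psi q) = q),
          {within p @^-1` U, continuous phi} &
          {within [set q : X * F | U q.1], continuous psi}].

Definition source_locally_trivial (G X : topologicalType) (beta : G -> X) : Prop :=
  locally_trivial_fibration beta.

Definition fixed_point (G X : topologicalType) (alpha beta : G -> X) (x : X) : Prop :=
  [set alpha g | g in [set g | beta g = x]] = [set x].

Definition invariant_set (G X : topologicalType) (alpha beta : G -> X) (A : set X) : Prop :=
  forall g, A (beta g) -> A (alpha g).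

Definition stable_point (G X : topologicalType) (alpha beta : G -> X) (x : X) : Prop :=
  forall U : set X, open U -> U x ->
    exists V : set X, [/\ open V, V x, V `<=` U & invariant_set alpha beta V].

(* Main.v *)
Require Import Defs.
From mathcomp Require Import all_boot all_order all_algebra.
From mathcomp Require Import all_classical all_reals all_analysis.
Local Open Scope classical_set_scope.

Lemma within_pt {T U : topologicalType} {A : set T} {f : T -> U} {a} {O : set U} :
  {within A, continuous f} -> A a -> open O -> O (f a) ->
  exists2 V, nbhs a V & forall y, V y -> A y -> O (f y).
Proof.
move=> ctsf Aa oO Ofa.
have := ctsf a O.
have H : nbhs (from_subspace A f a) O by apply: open_nbhs_nbhs.
move=> /(_ H) /= /(nbhs_subspace_ex _ Aa) [V nV VE].
exists V => // y Vy Ay.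
by have [] : ((f @^-1` O) `&` A) y by rewrite VE.
Qed.

Lemma nbhs_pair {X Y : topologicalType} {a : X} {b : Y} {N : set (X * Y)} :
  nbhs (a, b) N -> exists A B, [/\ nbhs a A, nbhs b B & forall x y, A x -> B y -> N (x, y)].
Proof.
case=> [[P Q]] /= [nP nQ] PQN; exists P, Q; split => // x y Px Qy.
exact: (PQN (x, y)).
Qed.

Lemma ltf_open (G X : topologicalType) (p : G -> X) :
  locally_trivial_fibration p -> forall O : set G, open O -> open (p @` O).
Proof.
move=> ltf O oO; rewrite openE => _ [g Og <-].
have [W [oW [Wy [F [phi [psi [c1 c2 cphi cpsi]]]]]]] := ltf (p g).
have [Wg1 [eg1 eg]] := c1 g Wy.
have pp : forall q : X * F, W q.1 -> p (psi q) = q.1.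
  move=> q Wq; have [Wpq ephi] := c2 q Wq.
  by have [_ [<- _]] := c1 _ Wpq; rewrite ephi.
have [N nN HN] := within_pt cpsi Wg1 oO (ltac:(by rewrite eg)).
case: (phi g) eg1 nN HN => a f /= -> nN HN.
have [A [B [nA nB AB]]] := nbhs_pair nN.
rewrite /interior /=.
have nW : nbhs (p g) W by apply: open_nbhs_nbhs.
apply: filterS (filterI nA nW) => z [Az Wz].
exists (psi (z, f)); last by rewrite pp.
apply: HN => //; apply: AB => //; exact: nbhs_singleton.
Qed.

Theorem theorem3p3 (G X : topologicalType)
  (alpha beta : G -> X) (u : X -> G) (inv : G -> G) (mul : G -> G -> G) :
  hausdorff_space G -> hausdorff_space X ->
  is_top_groupoid alpha beta u inv mul ->
  groupoid_proper alpha beta ->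
  source_locally_trivial beta ->
  forall x : X, fixed_point alpha beta x -> stable_point alpha beta x.
Proof.
move=> _ _ Hg Hp Hlt x fx U oU Ux.
have fib : forall g, beta g = x -> alpha g = x.
  move=> g bg; have : [set alpha g | g in [set g | beta g = x]] (alpha g).
    by exists g.
  by rewrite fx.
have cK := Hp _ (@compact_set1 _ (x, x)).
have [W [oW [Wx [F [phi [psi [c1 c2 cphi cpsi]]]]]]] := Hlt x.
have pp : forall q : X * F, W q.1 -> beta (psi q) = q.1.
  move=> q Wq; have [Wpq ephi] := c2 q Wq.
  by have [_ [<- _]] := c1 _ Wpq; rewrite ephi.
set K := (fun g => (alpha g, beta g)) @^-1` [set (x, x)] in cK.
have cF : compact [set: F].
  have -> : [set: F] = (snd \o phi) @` K.
    apply/seteqP; split => // f _.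
    have Wq : W (x, f).1 by [].
    have [_ ephi] := c2 _ Wq.
    exists (psi (x, f)); last by rewrite /= ephi.
    rewrite /K /= pp // fib //; exact: pp.
  apply: continuous_compact => //.
  have cphiK : {within K, continuous phi}.
    apply: continuous_subspaceW cphi.
    by move=> g; rewrite /K /= => -[_ ->].
  move=> g; apply: (@continuous_comp _ _ _ (from_subspace K phi) snd g); first exact: cphiK.
  exact: cvg_snd.
have nV0 : nbhs x [set y | forall f, W y -> U (alpha (psi (y, f)))].
  have := (compact_near_coveringP _).1 cF X (nbhs x)
    (fun y f => W y -> U (alpha (psi (y, f)))) _.
  have cov : forall f, [set: F] f -> \forall x' \near f & i \near nbhs x,
      (W i -> U (alpha (psi (i, x')))).
    move=> f _.
  have cap : {within [set q : X * F | W q.1], continuous (alpha \o psi)}.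
    move=> q; apply: (@continuous_comp _ _ _ (from_subspace _ psi) alpha q); first exact: cpsi.
    exact: (tg_cont_alpha Hg).
  have Ux' : U ((alpha \o psi) (x, f)).
    by rewrite /= fib //; exact: pp.
  have [N nN HN] := within_pt cap (Wx : [set q : X * F | W q.1] (x, f)) oU Ux'.
  have [A [B [nA nB AB]]] := nbhs_pair nN.
  exists (B, A); first by split.
  by move=> [f' y] /= [Bf' Ay] Wy; apply: (HN (y, f')) => //; exact: AB.
  move=> /(_ _ cov); apply: filterS => y H f; exact: H.
  set V0 := [set y | forall f, W y -> U (alpha (psi (y, f)))] in nV0.
  set V := V0° `&` W.
  have oV : open V by apply: openI => //; exact: open_interior.
  have Hsub : forall g, V (beta g) -> U (alpha g).
    move=> g [/interior_subset V0g Wg].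
    have [Wg1 [eg1 eg]] := c1 g Wg.
    have := V0g (phi g).2 Wg.
    by rewrite -eg1 -surjective_pairing eg.
  exists [set alpha g | g in beta @^-1` V]; split.
  + have -> : [set alpha g | g in beta @^-1` V] = beta @` (alpha @^-1` V).
      apply/seteqP; split => _ [g Vg <-].
        by exists (inv g); rewrite /= ?(tg_alpha_inv Hg) ?(tg_beta_inv Hg).
      by exists (inv g); rewrite /= ?(tg_alpha_inv Hg) ?(tg_beta_inv Hg).
    apply: ltf_open => //; apply: (continuousP _).1 => //.
    exact: (tg_cont_alpha Hg).
  + exists (u x); last exact: (tg_alpha_u Hg).
    rewrite /= (tg_beta_u Hg); split; last exact: Wx.
    exact: nV0.
  + by move=> _ [g Vg <-]; exact: Hsub.
  + move=> g [h Vh ebh]; exists (mul g h).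
      by rewrite /= (tg_beta_mul Hg).
    by rewrite (tg_alpha_mul Hg).
Qed.
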